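(* Let $k\ge5$ be an integer, let $\ell=1$, and let $G$ be a finite digraph. Then $$s_X(G)\le\frac{(k-1)^{k-1}}{(k+1)^{k+1}}\alpha^{k+2}.$$
   Context: Digraphs are finite, without loops; $xy$ denotes an arc from $x$ to $y$; two vertices are adjacent if at least one of $xy,yx$ is an arc. The oriented star $S_{k,1}$ has a center $c$, a set $O$ of $k$ out-leaves and one in-leaf $i$; its arcs are exactly $co$ ($o\in O$) and $ic$. For a digraph $G$ on $n$ vertices, let $\phi$ be a uniformly random map from $V(S_{k,1})$ to $V(G)$ (all $n^{k+2}$ maps equally likely), and let $\mathcal S$ be the set of maps $\phi$ that are isomorphisms from $S_{k,1}$ onto $G[\mathrm{Im}\,\phi]$ (in particular injective). $\rho(v)$ is the number of vertices adjacent to $v$ divided by $n$. $X=\{v:\rho(v)\ge1/2\}$, $\alpha=|X|/n$, and $s_X(G)=\Pr[\phi\in\mathcal S,\ \mathrm{Im}\,\phi\subseteq X]$. *)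

(* Defs.v *)
From HB Require Import structures.
From mathcomp Require Import all_boot all_order all_algebra.
Set Implicit Arguments. Unset Strict Implicit. Unset Printing Implicit Defensive.
Import Order.TTheory GRing.Theory Num.Theory.

Definition loopless (V : finType) (E : rel V) := forall x, ~~ E x x.

(* Oriented star S_{k,1}: vertex set 'I_(k+2); vertex 0 is the center c,
   vertex 1 the in-leaf i, vertices 2..k+1 the k out-leaves. *)
Definition star_arc (k : nat) (a b : 'I_k.+2) : bool :=
  ((val a == 0%N) && (2 <= val b)%N) || ((val a == 1%N) && (val b == 0%N)).

Definition star_iso (V : finType) (E : rel V) (k : nat)
  (phi : {ffun 'I_k.+2 -> V}) : bool :=
  injectiveb phi && [forall a, forall b, E (phi a) (phi b) == star_arc a b].

Definition adjdeg (V : finType) (E : rel V) (v : V) : nat :=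
  #|[set u | E u v || E v u]|.

(* X = {v : rho(v) >= 1/2}, i.e. 2 * deg(v) >= n *)
Definition Xset (V : finType) (E : rel V) : {set V} :=
  [set v | #|V| <= 2 * adjdeg E v]%N.

Definition alphaX (R : realFieldType) (V : finType) (E : rel V) : R :=
  #|Xset E|%:R / #|V|%:R.

(* s_X(G) = Pr[phi in S, Im phi ⊆ X] for phi uniform among all n^(k+2) maps *)
Definition sX (R : realFieldType) (V : finType) (E : rel V) (k : nat) : R :=
  #|[set phi : {ffun 'I_k.+2 -> V} |
       star_iso E phi && [forall a, phi a \in Xset E]]|%:R
  / (#|V| ^ k.+2)%:R.

(* Main.v *)
Require Import Defs.
From mathcomp Require Import all_boot all_order all_algebra.
Import Order.TTheory GRing.Theory Num.Theory.
Local Open Scope ring_scope.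
Set Implicit Arguments. Unset Strict Implicit.

Lemma amgm (R : realFieldType) (n : nat) (a b : R) : 0 <= a -> 0 <= b -> (0 < n)%N ->
  a * b ^+ n <= (n%:R ^+ n / (n.+1)%:R ^+ n.+1) * (a + b) ^+ n.+1.
Proof.
move=> a0 b0 n0.
pose E (i : 'I_n.+1) := if i == ord0 then n%:R * a else b.
have HE : {in 'I_n.+1, forall i, 0 <= E i}.
  by move=> i _; rewrite /E; case: ifP => _ //; rewrite mulr_ge0 ?ler0n.
have := (leif_AGM HE).1.
rewrite card_ord.
have eP : forall F : 'I_n.+1 -> R, \prod_(i in 'I_n.+1) F i = \prod_i F i.
  by move=> F; apply: eq_bigl.
have eS : forall F : 'I_n.+1 -> R, \sum_(i in 'I_n.+1) F i = \sum_i F i.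
  by move=> F; apply: eq_bigl.
rewrite eP eS.
rewrite big_ord_recl [X in _ * X <= _](eq_bigr (fun _ => b)); last first.
  by move=> i _; rewrite /E eq_sym (negbTE (neq_lift _ _)).
rewrite big_ord_recl [X in _ + X](eq_bigr (fun _ => b)); last first.
  by move=> i _; rewrite /E eq_sym (negbTE (neq_lift _ _)).
rewrite prodr_const sumr_const card_ord /E eqxx.
rewrite -[b *+ n]mulr_natl -mulrDr expr_div_n exprMn exprS -!mulrA => H.
rewrite -(ler_pM2l (_ : 0 < n%:R)) ?ltr0n //.
apply: (le_trans H); rewrite le_eqVlt; apply/orP; left; apply/eqP.
by rewrite [X in _ * (_ * X) = _]mulrC.
Qed.

Definition Tset (V : finType) (E : rel V) (o : V) : {set V} :=
  [set v in Xset E | ~~ E v o && ~~ E o v && (v != o)].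
Definition Aset (V : finType) (E : rel V) (c o : V) : {set V} :=
  [set v in Tset E o | E v c && ~~ E c v].
Definition Bset (V : finType) (E : rel V) (c o : V) : {set V} :=
  [set v in Tset E o | E c v && ~~ E v c].
Definition Sset (V : finType) (E : rel V) (o : V) : {set V} :=
  [set c in Xset E | E c o].

Lemma cardAB (V : finType) (E : rel V) c o :
  (#|Aset E c o| + #|Bset E c o| <= #|Tset E o|)%N.
Proof.
rewrite -cardsUI.
have -> : Aset E c o :&: Bset E c o = set0.
  apply/setP => v; rewrite !inE.
  by case: (E v c); case: (E c v); rewrite ?andbF ?andbT.
rewrite cards0 addn0; apply: subset_leq_card; apply/subsetP => v.
by rewrite !inE => /orP [] /andP [].
Qed.

Lemma cardST (V : finType) (E : rel V) o :
  (#|Sset E o| + #|Tset E o| <= #|Xset E|)%N.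
Proof.
rewrite -cardsUI.
have -> : Sset E o :&: Tset E o = set0.
  apply/setP => v; rewrite !inE.
  by case: (E v o); rewrite ?andbF ?andbT.
rewrite cards0 addn0; apply: subset_leq_card; apply/subsetP => v.
by rewrite !inE => /orP [] /andP [].
Qed.

Definition gg (V : finType) (E : rel V) (n : nat) (c o : V) (i : 'I_n) (v : V) : bool :=
  if nat_of_ord i == 0%N then v == c else if nat_of_ord i == 2%N then v == o
  else if nat_of_ord i == 1%N then v \in Aset E c o else v \in Bset E c o.

Lemma star_good (V : finType) (E : rel V) (p : nat) (phi : {ffun 'I_p.+3 -> V}) :
  star_iso E phi -> [forall a, phi a \in Xset E] ->
  [/\ phi (inord 2) \in Xset E, phi ord0 \in Sset E (phi (inord 2))
    & forall i, gg E (phi ord0) (phi (inord 2)) i (phi i)].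
Proof.
move=> /andP [/injectiveP inj /forallP H] /forallP HX.
have HE : forall a b, E (phi a) (phi b) = star_arc a b.
  by move=> a b; apply/eqP; move/forallP: (H a) => /(_ b).
set i2 : 'I_p.+3 := inord 2.
have v2 : nat_of_ord i2 = 2%N by rewrite /i2 inordK.
have HX' : forall i, (#|V| <= 2 * adjdeg E (phi i))%N.
  by move=> i; have := HX i; rewrite inE.
split => //.
  by rewrite inE HX HE /star_arc /= v2.
move=> i; rewrite /gg.
case: ifP => [/eqP h0|h0].
  by apply/eqP; congr (phi _); apply/val_inj.
case: ifP => [/eqP h2|h2].
  by apply/eqP; congr (phi _); apply/val_inj; exact: (etrans h2 (esym v2)).
have ni2 : phi i != phi i2.
  apply/negP => /eqP /inj /(congr1 (@nat_of_ord _)); rewrite v2 => h; by rewrite h eqxx in h2.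
case: ifP => [/eqP h1|h1].
  by rewrite !inE HX' !HE /star_arc /= v2 h1 /= ni2.
have hge : (2 <= nat_of_ord i)%N.
  by move: h0 h1; case: (nat_of_ord i) => [|[|j]].
by rewrite !inE HX' !HE /star_arc /= v2 h1 h0 /= ni2 hge.
Qed.

Lemma sum_ind (R : realFieldType) (V : finType) (A : {set V}) :
  \sum_v ((v \in A)%:R : R) = #|A|%:R.
Proof.
rewrite -sumr_const [RHS]big_mkcond; apply: eq_bigr => v _; by case: (v \in A).
Qed.

Lemma sum_eq1 (R : realFieldType) (V : finType) (c : V) :
  \sum_v ((v == c)%:R : R) = 1.
Proof.
rewrite (bigD1 c) //= eqxx big1 ?addr0 // => v /negbTE -> //.
Qed.

Definition hh (R : realFieldType) (a b : R) (j : nat) : R :=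
  if j == 0%N then 1 else if j == 2%N then 1 else if j == 1%N then a else b.

Lemma sum_gg (R : realFieldType) (V : finType) (E : rel V) n (c o : V) (i : 'I_n) :
  \sum_v ((gg E c o i v)%:R : R) =
  hh (#|Aset E c o|%:R) (#|Bset E c o|%:R) (nat_of_ord i).
Proof.
rewrite /gg /hh; case: ifP => _; first exact: sum_eq1.
case: ifP => _; first exact: sum_eq1.
by case: ifP => _; apply: sum_ind.
Qed.

Lemma prod_hh (R : realFieldType) (a b : R) p :
  \prod_(i < p.+3) hh a b i = a * b ^+ p.
Proof.
rewrite -(big_mkord xpredT (hh a b)) big_ltn // big_ltn // big_ltn //.
rewrite /hh /= mul1r mul1r.
rewrite (eq_big_nat _ _ (F2 := fun _ => b)); last first.
  by move=> j /andP [h _]; case: j h => [|[|[|j]]].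
by rewrite prodr_const_nat subSS subSS subSS subn0.
Qed.

Lemma count_le (R : realFieldType) (V : finType) (E : rel V) p :
  (#|[set phi : {ffun 'I_p.+3 -> V} | star_iso E phi && [forall a, phi a \in Xset E]]|%:R : R)
  <= \sum_o \sum_c ((o \in Xset E) && (c \in Sset E o))%:R *
        (#|Aset E c o|%:R * #|Bset E c o|%:R ^+ p).
Proof.
set S := [set phi : {ffun 'I_p.+3 -> V} | _].
pose W (phi : {ffun 'I_p.+3 -> V}) : R := \sum_o \sum_c
  ((o \in Xset E) && (c \in Sset E o))%:R * \prod_i (gg E c o i (phi i))%:R.
have W0 : forall phi, 0 <= W phi.
  move=> phi; apply: sumr_ge0 => o _; apply: sumr_ge0 => c _.
  by apply: mulr_ge0; [exact: ler0n | apply: prodr_ge0 => i _; exact: ler0n].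
have W1 : forall phi, phi \in S -> 1 <= W phi.
  move=> phi; rewrite inE => /andP [hs hx]; have [h2 h0 hg] := star_good hs hx.
  rewrite /W (bigD1 (phi (inord 2))) //= (bigD1 (phi ord0)) //=.
  rewrite h2 h0 /= mul1r big1 => [|i _]; last by rewrite hg.
  rewrite -addrA lerDl addr_ge0 // sumr_ge0 // => [c _|o _].
    by apply: mulr_ge0; [exact: ler0n | apply: prodr_ge0 => i _; exact: ler0n].
  apply: sumr_ge0 => c _.
  by apply: mulr_ge0; [exact: ler0n | apply: prodr_ge0 => i _; exact: ler0n].
apply: (@le_trans _ _ (\sum_phi W phi)).
  rewrite -sumr_const; apply: (@le_trans _ _ (\sum_(phi in S) W phi)).
    by apply: ler_sum => phi /W1.
  rewrite [X in _ <= X](bigID (fun phi => phi \in S)) /= lerDl.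
  by apply: sumr_ge0 => phi _.
rewrite /W exchange_big; apply: ler_sum => o _; rewrite exchange_big.
apply: ler_sum => c _; rewrite -mulr_sumr.
rewrite -(bigA_distr_bigA (fun (i : 'I_p.+3) (v : V) => (gg E c o i v)%:R : R)).
rewrite (eq_bigr _ (fun i _ => sum_gg _ _ _ _ i)) prod_hh.
by [].
Qed.

Lemma bound_sum (R : realFieldType) (V : finType) (E : rel V) p : (0 < p)%N ->
  \sum_o \sum_c ((o \in Xset E) && (c \in Sset E o))%:R *
        ((#|Aset E c o|%:R : R) * #|Bset E c o|%:R ^+ p)
  <= (p%:R ^+ p / p.+2%:R ^+ p.+2) * (#|Xset E|%:R) ^+ p.+3.
Proof.
move=> p0.
set m : R := #|Xset E|%:R.
set K1 : R := p%:R ^+ p / p.+1%:R ^+ p.+1.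
set K2 : R := p.+1%:R ^+ p.+1 / p.+2%:R ^+ p.+2.
have K10 : 0 <= K1 by rewrite /K1 divr_ge0 // exprn_ge0 // ler0n.
have K20 : 0 <= K2 by rewrite /K2 divr_ge0 // exprn_ge0 // ler0n.
have inner : forall o, o \in Xset E ->
  \sum_c ((o \in Xset E) && (c \in Sset E o))%:R *
        ((#|Aset E c o|%:R : R) * #|Bset E c o|%:R ^+ p) <= K1 * K2 * m ^+ p.+2.
  move=> o oY.
  set t : R := #|Tset E o|%:R.
  set s : R := #|Sset E o|%:R.
  apply: (@le_trans _ _ (\sum_c (c \in Sset E o)%:R * (K1 * t ^+ p.+1))).
    apply: ler_sum => c _; rewrite oY /=.
    case: (c \in Sset E o); rewrite ?mul0r // !mul1r.
    apply: (le_trans (amgm _ _ p0)); rewrite ?ler0n //.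
    apply: ler_wpM2l => //; apply: lerXn2r; rewrite ?nnegrE ?addr_ge0 ?ler0n //.
    by rewrite -natrD ler_nat cardAB.
  rewrite -mulr_suml sum_ind -/s.
  rewrite mulrCA -mulrA; apply: ler_wpM2l => //.
  apply: (le_trans (amgm _ _ (ltn0Sn p))); rewrite ?ler0n //.
  apply: ler_wpM2l => //; apply: lerXn2r; rewrite ?nnegrE ?addr_ge0 ?ler0n //.
  by rewrite -natrD ler_nat cardST.
apply: (@le_trans _ _ (\sum_o (o \in Xset E)%:R * (K1 * K2 * m ^+ p.+2))).
  apply: ler_sum => o _; case oY: (o \in Xset E); last first.
    by rewrite mul0r big1 // => c _; rewrite /= mul0r.
  by rewrite mul1r; have := inner o oY; rewrite oY.
rewrite -mulr_suml sum_ind -/m.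
have -> : p%:R ^+ p / p.+2%:R ^+ p.+2 = K1 * K2 :> R.
  rewrite /K1 /K2 mulrA -[_ / _ * _]mulrA mulVf ?mulr1 //.
  by rewrite expf_neq0 // pnatr_eq0.
by rewrite [m ^+ p.+3]exprS mulrCA.
Qed.

Theorem claim4p9 (R : realFieldType) (k : nat) (V : finType) (E : rel V) :
  (5 <= k)%N -> loopless E ->
  sX R E k <=
    ((k - 1)%:R ^+ (k - 1) / (k + 1)%:R ^+ (k + 1)) * (alphaX R E) ^+ (k + 2).
Proof.
case: k => [//|p] hk _.
have p0 : (0 < p)%N by case: p hk.
rewrite subn1 /= addn1 addn2 /sX /alphaX expr_div_n natrX mulrA.
apply: ler_wpM2r; first by rewrite invr_ge0 exprn_ge0 ?ler0n.
apply: le_trans (count_le R E p) _.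
exact: bound_sum.
Qed.
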